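(* Let $(G,\sigma)$ be a connected RBMG with exactly three colors $r,s,t$ that contains an induced $6$-cycle $\langle x_1y_1z_1x_2y_2z_2\rangle$ with $\sigma(x_1)=\sigma(x_2)=r$, $\sigma(y_1)=\sigma(y_2)=s$, $\sigma(z_1)=\sigma(z_2)=t$. Then every leaf-colored tree $(T,\sigma)$ that explains $(G,\sigma)$ has the following property: with $v:=\mathrm{lca}_T(x_1,x_2,y_1,y_2,z_1,z_2)$ there exist three distinct children $v_1,v_2,v_3\in\mathrm{child}(v)$ such that either $x_1,y_1\preceq_T v_1$, $x_2,z_1\preceq_T v_2$, $y_2,z_2\preceq_T v_3$, or $y_1,z_1\preceq_T v_1$, $x_2,y_2\preceq_T v_2$, $x_1,z_2\preceq_T v_3$.
   Context: A planted phylogenetic tree $T$ is a rooted tree with distinguished root $0_T$ of degree $1$, all other non-leaf vertices of degree $\ge3$; $L(T)$ its leaves (excluding $0_T$), $|L(T)|\ge2$. $\preceq_T$ is the ancestor order towards $0_T$; $T(v)$, $\mathrm{child}(v)$, $\mathrm{lca}_T$ as usual. $\sigma$ maps $L(T)$ to a set of colors. $y$ is a best match of $x$ if $\sigma(x)\ne\sigma(y)$ and $\mathrm{lca}_T(x,y)\preceq_T\mathrm{lca}_T(x,y')$ for all $y'$ with $\sigma(y')=\sigma(y)$. The RBMG $G(T,\sigma)$ is the vertex-colored undirected graph on $L(T)$ whose edges are reciprocal best match pairs; a vertex-colored graph $(G,\sigma)$ is an RBMG if it equals $G(T,\sigma)$ for some leaf-colored tree $(T,\sigma)$, in which case $(T,\sigma)$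 explains $(G,\sigma)$. The cycle $\langle x_1y_1z_1x_2y_2z_2\rangle$ has edges $x_1y_1,y_1z_1,z_1x_2,x_2y_2,y_2z_2,z_2x_1$, and induced means no other edges among these six vertices. *)

(* Defs.v *)
From mathcomp Require Import all_boot.
Set Implicit Arguments. Unset Strict Implicit. Unset Printing Implicit Defensive.

(* A rooted tree on a finite vertex type V is given by a parent map [par]
   and a root [r0]; the root is its own parent (sentinel). *)
Section Tree.
Variables (V : finType) (par : V -> V) (r0 : V).

(* u ⪯_T w : w is an ancestor of u (or u itself). *)
Definition anc (u w : V) : bool := [exists n : 'I_#|V|, iter n par u == w].

Definition child (v u : V) : bool := (par u == v) && (u != v).

Definition leaf (u : V) : bool := (u != r0) && [forall w, ~~ child u w].

Definition rooted_tree : Prop :=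
  par r0 = r0 /\ (forall v, par v = v -> v = r0) /\ (forall v, anc v r0).

(* planted phylogenetic tree: root of degree 1, every other inner vertex of
   degree >= 3 (one parent + >= 2 children), at least two leaves. *)
Definition planted_phylo : Prop :=
  rooted_tree /\ #|[pred u | child r0 u]| = 1 /\
  (forall v, v != r0 -> ~~ leaf v -> 2 <= #|[pred u | child v u]|) /\
  2 <= #|[pred u | leaf u]|.

Definition is_lca (A : seq V) (v : V) : bool :=
  all (fun a => anc a v) A &&
  [forall w, all (fun a => anc a w) A ==> anc v w].

Variables (C : eqType) (sigma : V -> C).

Definition best_match (x y : V) : bool :=
  leaf x && leaf y && (sigma x != sigma y) &&
  [forall y', (leaf y' && (sigma y' == sigma y)) ==>
     [forall u, [forall w, is_lca [:: x; y] u ==> is_lca [:: x; y'] w ==> anc u w]]].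

Definition rbmg_edge (x y : V) : bool := best_match x y && best_match y x.

Definition rbmg_connected : Prop :=
  forall x y, leaf x -> leaf y -> connect rbmg_edge x y.

End Tree.

Definition induced6 (V : eqType) (E : V -> V -> bool) (a b c d e f : V) : Prop :=
  uniq [:: a; b; c; d; e; f] /\
  E a b /\ E b c /\ E c d /\ E d e /\ E e f /\ E f a /\
  ~~ E a c /\ ~~ E a d /\ ~~ E a e /\
  ~~ E b d /\ ~~ E b e /\ ~~ E b f /\
  ~~ E c e /\ ~~ E c f /\ ~~ E d f.

(* Main.v *)
Require Import Defs.
From mathcomp Require Import all_boot.
Set Implicit Arguments. Unset Strict Implicit. Unset Printing Implicit Defensive.

Definition Kb (T : eqType) (a b c d : T) : bool :=
  ((a == b) ==> (c == a) && (d == b)) && ((a != b) ==> (c == a) || (d == b)).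
Definition Pgen (T : eqType) (a b c d e f : T) : bool :=
  ~~ [&& a == b, a == c, a == d, a == e & a == f] &&
  Kb a c f d && Kb b d a e && Kb c e b f && Kb d f c a && Kb e a d b && Kb f b e c.
Definition Qgen (T : eqType) (a b c d e f : T) : bool :=
  [&& a == b, c == d, e == f, a != c, a != e & c != e] ||
  [&& b == c, d == e, f == a, b != d, b != f & d != f].

Lemma bf : all (fun a => all (fun b => all (fun c => all (fun d => all (fun e => all (fun f =>
  Pgen a b c d e f ==> Qgen a b c d e f) (iota 0 6)) (iota 0 6)) (iota 0 6)) (iota 0 6)) (iota 0 6)) (iota 0 6).
Proof. by vm_compute. Qed.

Lemma comb (T : eqType) (a b c d e f : T) : Pgen a b c d e f -> Qgen a b c d e f.
Proof.
set s := [:: a; b; c; d; e; f].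
have eqL : forall x y, x \in s -> y \in s -> (x == y) = (index x s == index y s).
  move=> x y hx hy; apply/eqP/eqP => [-> // | h].
  by rewrite -(nth_index x hx) -(nth_index x hy) h.
have ha : a \in s by rewrite !inE eqxx ?orbT.
have hb : b \in s by rewrite !inE eqxx ?orbT.
have hc : c \in s by rewrite !inE eqxx ?orbT.
have hd : d \in s by rewrite !inE eqxx ?orbT.
have he : e \in s by rewrite !inE eqxx ?orbT.
have hf : f \in s by rewrite !inE eqxx ?orbT.
have im : forall x, x \in s -> index x s \in iota 0 6.
  by move=> x hx; rewrite mem_iota add0n -[6]/(size s) index_mem.
have H := bf.
move/allP: H => /(_ _ (im _ ha)) /allP /(_ _ (im _ hb)) /allP /(_ _ (im _ hc))
  /allP /(_ _ (im _ hd)) /allP /(_ _ (im _ he)) /allP /(_ _ (im _ hf)) /implyP H.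
have -> : Pgen a b c d e f = Pgen (index a s) (index b s) (index c s) (index d s) (index e s) (index f s).
  by rewrite /Pgen /Kb !eqL.
have -> : Qgen a b c d e f = Qgen (index a s) (index b s) (index c s) (index d s) (index e s) (index f s).
  by rewrite /Qgen !eqL.
exact: H.
Qed.
Section TreeFacts.
Variables (V : finType) (par : V -> V) (r0 : V).
Hypothesis Hroot : rooted_tree par r0.

Lemma iter_r0 k : iter k par r0 = r0.
Proof. case: Hroot => h _; elim: k => //= k ->; exact h. Qed.

Lemma ancP a b : reflect (exists k, iter k par a = b) (anc par a b).
Proof.
apply: (iffP existsP) => [[k /eqP hk] | [k hk]]; first by exists k.
case: Hroot => _ [_ hr].
have /existsP [N /eqP hN] := hr a.
have [lt|ge] := ltnP k #|V|.
  by exists (Ordinal lt); apply/eqP.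
exists N; apply/eqP; rewrite hN -hk.
have hle : N <= k by rewrite ltnW // (leq_trans (ltn_ord N) ge).
by rewrite -(subnK hle) iterD hN iter_r0.
Qed.

Lemma anc_refl a : anc par a a.
Proof. by apply/ancP; exists 0. Qed.

Lemma anc_trans a b c : anc par a b -> anc par b c -> anc par a c.
Proof. move=> /ancP[k hk] /ancP[m hm]; apply/ancP; exists (m + k); by rewrite iterD hk. Qed.

Lemma anc_par a : anc par a (par a).
Proof. by apply/ancP; exists 1. Qed.

Lemma anc_antisym a b : anc par a b -> anc par b a -> a = b.
Proof.
move=> /ancP[k hk] /ancP[m hm].
have per : forall j, iter (j * (m + k)) par a = a.
  elim=> [|j IH] //=. by rewrite mulSn iterD IH iterD hk hm.
case: Hroot => _ [_ hr]; have /existsP [N /eqP hN] := hr a.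
have [k0|kpos] := eqVneq (m + k) 0.
  by move/eqP: k0; rewrite addn_eq0 => /andP[_ /eqP k0]; move: hk; rewrite k0.
have hle : N <= N * (m + k) by rewrite leq_pmulr // lt0n.
have ha : a = r0 by rewrite -(per N) -(subnK hle) iterD hN iter_r0.
by rewrite -hk ha iter_r0.
Qed.

Lemma anc_total a b c : anc par a b -> anc par a c -> anc par b c || anc par c b.
Proof.
move=> /ancP[k hk] /ancP[m hm].
have [le|lt] := leqP k m.
  apply/orP; left; apply/ancP; exists (m - k); by rewrite -hk -iterD subnK.
apply/orP; right; apply/ancP; exists (k - m); by rewrite -hm -iterD subnK // ltnW.
Qed.

Lemma anc_step a b : anc par a b -> a != b -> anc par (par a) b.
Proof.
move=> /ancP[[|k] hk] ne; first by rewrite /= in hk; rewrite hk eqxx in ne.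
apply/ancP; exists k; by rewrite -iterSr.
Qed.

Lemma ch_exists a w : anc par a w -> a != w -> exists c, child par w c && anc par a c.
Proof.
move=> /ancP hex naw.
have hP : exists k, iter k par a == w by case: hex => k hk; exists k; apply/eqP.
case: (ex_minnP hP) => k /eqP hk hmin.
case: k hk hmin => [|k] hk hmin; first by rewrite /= in hk; rewrite hk eqxx in naw.
exists (iter k par a); apply/andP; split.
  rewrite /child -hk /=. apply/andP; split => //. apply/negP => /eqP e.
  by have := hmin k; rewrite e -[par _]/(iter k.+1 par a) hk eqxx ltnn => /(_ isT).
by apply/ancP; exists k.
Qed.

Lemma child_uniq0 w c1 c2 : child par w c1 -> child par w c2 -> anc par c1 c2 -> c1 = c2.
Proof.
move=> /andP[/eqP p1 n1] /andP[/eqP p2 n2] h12; apply/eqP/negPn/negP => ne.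
have := anc_step h12 ne; rewrite p1 => hw.
have h2w : anc par c2 w by rewrite -p2; apply: anc_par.
have e := anc_antisym hw h2w.
by rewrite e eqxx in n2.
Qed.

Lemma child_uniq w c1 c2 a : child par w c1 -> child par w c2 -> anc par a c1 -> anc par a c2 -> c1 = c2.
Proof.
move=> h1 h2 a1 a2; case/orP: (anc_total a1 a2) => h.
  exact: child_uniq0 h1 h2 h.
by symmetry; apply: child_uniq0 h2 h1 h.
Qed.

Lemma leaf_anc u a : leaf par r0 u -> anc par a u -> a = u.
Proof.
move=> /andP[_ /forallP hl] h; apply/eqP/negPn/negP => ne.
by case: (ch_exists h ne) => c /andP[hc _]; move: (hl c); rewrite hc.
Qed.

Lemma lca_exists a b : exists l, is_lca par [:: a; b] l.
Proof.
case: Hroot => _ [_ hr].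
have hP : exists k, anc par b (iter k par a).
  have /ancP [N hN] := hr a; exists N; rewrite hN; exact: hr.
case: (ex_minnP hP) => k hk hmin.
exists (iter k par a); rewrite /is_lca /= hk !andbT.
apply/andP; split; first by apply/ancP; exists k.
apply/forallP => w; apply/implyP => /andP[/ancP[j hj] /andP[hbw _]].
have hkj : k <= j by apply: hmin; rewrite hj.
apply/ancP; exists (j - k); by rewrite -iterD subnK.
Qed.

Lemma lca_unique A l1 l2 : is_lca par A l1 -> is_lca par A l2 -> l1 = l2.
Proof.
move=> /andP[h1 /forallP f1] /andP[h2 /forallP f2].
apply: anc_antisym; [exact: (implyP (f1 l2) h2) | exact: (implyP (f2 l1) h1)].
Qed.

Variables (C : eqType) (sigma : V -> C).

Lemma bm_use x y y' a b :
  best_match par r0 sigma x y -> leaf par r0 y' -> sigma y' = sigma y ->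
  is_lca par [:: x; y] a -> is_lca par [:: x; y'] b -> anc par a b.
Proof.
move=> /andP[_ /forallP H] ly' sy ha hb.
move: (H y'); rewrite ly' sy eqxx /= => /forallP /(_ a) /forallP /(_ b).
by rewrite ha hb.
Qed.

Variable v : V.

Lemma L1 a b ca cb : child par v ca -> anc par a ca -> child par v cb -> anc par b cb ->
  ca != cb -> is_lca par [:: a; b] v.
Proof.
move=> hca ha hcb hb ne.
have pa : anc par ca v by case/andP: hca => /eqP <- _; exact: anc_par.
have pb : anc par cb v by case/andP: hcb => /eqP <- _; exact: anc_par.
rewrite /is_lca /= (anc_trans ha pa) (anc_trans hb pb) /=.
apply/forallP => w; apply/implyP => /andP[haw /andP[hbw _]].
case/orP: (anc_total haw (anc_trans ha pa)) => // hwv.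
have [e|nwv] := eqVneq w v; first by rewrite e anc_refl.
case: (ch_exists hwv nwv) => c /andP[hc hwc].
have e1 := child_uniq hc hca (anc_trans haw hwc) ha.
have e2 := child_uniq hc hcb (anc_trans hbw hwc) hb.
by rewrite -e1 -e2 eqxx in ne.
Qed.

Lemma K1 u o n cu co cn : leaf par r0 o -> child par v cu -> anc par u cu ->
  child par v co -> anc par o co -> child par v cn -> anc par n cn ->
  best_match par r0 sigma u n -> sigma o = sigma n -> cu = co -> cn = cu.
Proof.
move=> lo hcu hu hco ho hcn hn bm so e.
apply/eqP/negPn/negP => ne.
have hv : is_lca par [:: u; n] v by apply: (L1 hcu hu hcn hn); rewrite eq_sym.
case: (lca_exists u o) => b hb.
have hvb := bm_use bm lo so hv hb.
have hbc : anc par b cu.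
  move/andP: hb => [_ /forallP /(_ cu) /implyP]; apply; rewrite /= hu e ho.
  done.
have pu : anc par cu v by case/andP: hcu => /eqP <- _; exact: anc_par.
have ev := anc_antisym pu (anc_trans hvb hbc).
by move: hcu; rewrite /child ev eqxx andbF.
Qed.

Lemma bm_from u o n : leaf par r0 u -> leaf par r0 o -> sigma u != sigma o ->
  best_match par r0 sigma u n -> sigma o = sigma n ->
  is_lca par [:: u; n] v -> is_lca par [:: u; o] v -> best_match par r0 sigma u o.
Proof.
move=> lu lo suo bm so hun huo.
rewrite /best_match lu lo suo /=.
apply/forallP => y'; apply/implyP => /andP[ly' /eqP sy'].
apply/forallP => a; apply/forallP => b; apply/implyP => ha; apply/implyP => hb.
rewrite (lca_unique ha huo).
apply: (bm_use bm ly' _ hun hb); by rewrite sy' so.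
Qed.

Lemma Kt u o n n' cu co cn cn' : leaf par r0 u -> leaf par r0 o ->
  child par v cu -> anc par u cu -> child par v co -> anc par o co ->
  child par v cn -> anc par n cn -> child par v cn' -> anc par n' cn' ->
  best_match par r0 sigma u n -> best_match par r0 sigma o n' ->
  sigma o = sigma n -> sigma u = sigma n' -> sigma u != sigma o ->
  ~~ (best_match par r0 sigma u o && best_match par r0 sigma o u) -> Kb cu co cn cn'.
Proof.
move=> lu lo hcu hu hco ho hcn hn hcn' hn' bmn bmn' so su suo nE.
rewrite /Kb; apply/andP; split; apply/implyP.
  move/eqP => e.
  rewrite (K1 lo hcu hu hco ho hcn hn bmn so e) eqxx /=.
  by rewrite (K1 lu hco ho hcu hu hcn' hn' bmn' su (esym e)) eqxx.
move=> ne; apply/negPn/negP; rewrite negb_or => /andP[h1 h2].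
apply: (negP nE); apply/andP; split.
  apply: (bm_from lu lo suo bmn so).
  - by apply: (L1 hcu hu hcn hn); rewrite eq_sym.
  - exact: (L1 hcu hu hco ho).
apply: (bm_from lo lu _ bmn' su).
- by rewrite eq_sym.
- by apply: (L1 hco ho hcn' hn'); rewrite eq_sym.
- by apply: (L1 hco ho hcu hu); rewrite eq_sym.
Qed.

End TreeFacts.

Lemma neq_v (V : finType) (par : V -> V) (r0 : V) (Hroot : rooted_tree par r0) (a b v : V) :
  leaf par r0 a -> anc par b v -> b != a -> a != v.
Proof.
move=> la hb nba; apply/negP => /eqP e; subst v.
by rewrite (leaf_anc Hroot la hb) eqxx in nba.
Qed.

Lemma diffcol (V : finType) (C : eqType) (sigma : V -> C) a b : sigma a != sigma b -> a != b.
Proof. by apply: contraNneq => ->. Qed.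

Theorem mainTheorem18 (V : finType) (par : V -> V) (r0 : V)
  (C : eqType) (sigma : V -> C) (r s t : C)
  (x1 y1 z1 x2 y2 z2 : V) :
  planted_phylo par r0 ->
  rbmg_connected par r0 sigma ->
  uniq [:: r; s; t] ->
  (forall x, leaf par r0 x -> sigma x \in [:: r; s; t]) ->
  (leaf par r0 x1 /\ leaf par r0 y1 /\ leaf par r0 z1 /\
   leaf par r0 x2 /\ leaf par r0 y2 /\ leaf par r0 z2) ->
  sigma x1 = r -> sigma x2 = r -> sigma y1 = s -> sigma y2 = s ->
  sigma z1 = t -> sigma z2 = t ->
  induced6 (rbmg_edge par r0 sigma) x1 y1 z1 x2 y2 z2 ->
  forall v, is_lca par [:: x1; x2; y1; y2; z1; z2] v ->
  exists v1 v2 v3,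
    (uniq [:: v1; v2; v3] /\ child par v v1 /\ child par v v2 /\ child par v v3) /\
    ((anc par x1 v1 /\ anc par y1 v1 /\ anc par x2 v2 /\ anc par z1 v2 /\
      anc par y2 v3 /\ anc par z2 v3) \/
     (anc par y1 v1 /\ anc par z1 v1 /\ anc par x2 v2 /\ anc par y2 v2 /\
      anc par x1 v3 /\ anc par z2 v3)).
Proof.
move=> [Hroot _] _ Hu3 _ [lx1 [ly1 [lz1 [lx2 [ly2 lz2]]]]] sx1 sx2 sy1 sy2 sz1 sz2 Hcyc v Hv.
case: Hcyc => _ [e1 [e2 [e3 [e4 [e5 [e6 [n1 [n2 [n3 [n4 [n5 [n6 [n7 [n8 n9]]]]]]]]]]]]]].
move: Hu3; rewrite /= !inE !negb_or => Hu3.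
case/and3P: Hu3 => /andP[rs rt] st _.
move: (Hv) => /andP[/allP hall /forallP hmin].
have ax1 : anc par x1 v by apply: hall; rewrite !inE eqxx ?orbT.
have ax2 : anc par x2 v by apply: hall; rewrite !inE eqxx ?orbT.
have ay1 : anc par y1 v by apply: hall; rewrite !inE eqxx ?orbT.
have ay2 : anc par y2 v by apply: hall; rewrite !inE eqxx ?orbT.
have az1 : anc par z1 v by apply: hall; rewrite !inE eqxx ?orbT.
have az2 : anc par z2 v by apply: hall; rewrite !inE eqxx ?orbT.
have nx1 : x1 != v by apply: (neq_v Hroot lx1 ay1); apply: (diffcol (sigma:=sigma)); rewrite sy1 sx1 eq_sym.
have ny1 : y1 != v by apply: (neq_v Hroot ly1 ax1); apply: (diffcol (sigma:=sigma)); rewrite sy1 sx1.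
have nz1 : z1 != v by apply: (neq_v Hroot lz1 ax1); apply: (diffcol (sigma:=sigma)); rewrite sz1 sx1.
have nx2 : x2 != v by apply: (neq_v Hroot lx2 ay1); apply: (diffcol (sigma:=sigma)); rewrite sy1 sx2 eq_sym.
have ny2 : y2 != v by apply: (neq_v Hroot ly2 ax1); apply: (diffcol (sigma:=sigma)); rewrite sy2 sx1.
have nz2 : z2 != v by apply: (neq_v Hroot lz2 ax1); apply: (diffcol (sigma:=sigma)); rewrite sz2 sx1.
case: (ch_exists Hroot ax1 nx1) => cx1 /andP[hcx1 hx1].
case: (ch_exists Hroot ay1 ny1) => cy1 /andP[hcy1 hy1].
case: (ch_exists Hroot az1 nz1) => cz1 /andP[hcz1 hz1].
case: (ch_exists Hroot ax2 nx2) => cx2 /andP[hcx2 hx2].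
case: (ch_exists Hroot ay2 ny2) => cy2 /andP[hcy2 hy2].
case: (ch_exists Hroot az2 nz2) => cz2 /andP[hcz2 hz2].
case/andP: e1 => b_x1y1 b_y1x1.
case/andP: e2 => b_y1z1 b_z1y1.
case/andP: e3 => b_z1x2 b_x2z1.
case/andP: e4 => b_x2y2 b_y2x2.
case/andP: e5 => b_y2z2 b_z2y2.
case/andP: e6 => b_z2x1 b_x1z2.
have NA : ~~ [&& cx1 == cy1, cx1 == cz1, cx1 == cx2, cx1 == cy2 & cx1 == cz2].
  apply/negP => /and5P[/eqP q1 /eqP q2 /eqP q3 /eqP q4 /eqP q5].
  rewrite -q1 in hy1; rewrite -q2 in hz1; rewrite -q3 in hx2; rewrite -q4 in hy2; rewrite -q5 in hz2.
  have hc : anc par v cx1 by apply: (implyP (hmin cx1)); rewrite /= hx1 hx2 hy1 hy2 hz1 hz2.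
  have pc : anc par cx1 v by case/andP: hcx1 => /eqP <- _; exact: (anc_par Hroot).
  have ev := anc_antisym Hroot pc hc.
  by move: hcx1; rewrite /child ev eqxx andbF.
have K_1 : Kb cx1 cz1 cz2 cx2.
  apply: (Kt Hroot lx1 lz1 hcx1 hx1 hcz1 hz1 hcz2 hz2 hcx2 hx2 b_x1z2 b_z1x2) => //.
  - by rewrite sz1 sz2.
  - by rewrite sx1 sx2.
  - by rewrite sx1 sz1.
have K_2 : Kb cy1 cx2 cx1 cy2.
  apply: (Kt Hroot ly1 lx2 hcy1 hy1 hcx2 hx2 hcx1 hx1 hcy2 hy2 b_y1x1 b_x2y2) => //.
  - by rewrite sx2 sx1.
  - by rewrite sy1 sy2.
  - by rewrite sy1 sx2 eq_sym.
have K_3 : Kb cz1 cy2 cy1 cz2.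
  apply: (Kt Hroot lz1 ly2 hcz1 hz1 hcy2 hy2 hcy1 hy1 hcz2 hz2 b_z1y1 b_y2z2) => //.
  - by rewrite sy2 sy1.
  - by rewrite sz1 sz2.
  - by rewrite sz1 sy2 eq_sym.
have K_4 : Kb cx2 cz2 cz1 cx1.
  apply: (Kt Hroot lx2 lz2 hcx2 hx2 hcz2 hz2 hcz1 hz1 hcx1 hx1 b_x2z1 b_z2x1) => //.
  - by rewrite sz2 sz1.
  - by rewrite sx2 sx1.
  - by rewrite sx2 sz2.
have K_5 : Kb cy2 cx1 cx2 cy1.
  apply: (Kt Hroot ly2 lx1 hcy2 hy2 hcx1 hx1 hcx2 hx2 hcy1 hy1 b_y2x2 b_x1y1).
  - by rewrite sx1 sx2.
  - by rewrite sy2 sy1.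
  - by rewrite sy2 sx1 eq_sym.
  - by move: n3; rewrite /rbmg_edge andbC.
have K_6 : Kb cz2 cy1 cy2 cz1.
  apply: (Kt Hroot lz2 ly1 hcz2 hz2 hcy1 hy1 hcy2 hy2 hcz1 hz1 b_z2y2 b_y1z1).
  - by rewrite sy1 sy2.
  - by rewrite sz2 sz1.
  - by rewrite sz2 sy1 eq_sym.
  - by move: n6; rewrite /rbmg_edge andbC.
have HP : Pgen cx1 cy1 cz1 cx2 cy2 cz2 by rewrite /Pgen NA K_1 K_2 K_3 K_4 K_5 K_6.
case/orP: (comb HP).
  case/andP => /eqP q1 /andP[/eqP q2 /andP[/eqP q3 /andP[q4 /andP[q5 q6]]]].
  rewrite -q1 in hy1; rewrite q2 in hz1 q4 q6; rewrite -q3 in hz2.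
  exists cx1, cx2, cy2; split; last by left.
  by rewrite /= !inE !negb_or q4 q5 q6 hcx1 hcx2 hcy2.
case/andP => /eqP q1 /andP[/eqP q2 /andP[/eqP q3 /andP[q4 /andP[q5 q6]]]].
rewrite -q1 in hz1; rewrite -q2 in hy2; rewrite q3 in hz2 q5 q6.
exists cy1, cx2, cx1; split; last by right.
rewrite /= !inE !negb_or q4 q5 hcx1 hcx2 hcy1; split => //; apply/and3P; split => //.
Qed.
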